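(* For every $p\in(0,1]$ there exists $\alpha>0$ such that for every integer $n\ge1$: if an online algorithm for the $\mathrm{AND}$ instance with $n$ variables reveals at least one of the variables with probability at least $p$, then its expected cost is at least $\alpha\cdot n$.
   Context: The $\mathrm{AND}$ instance with $n$ variables: $f(x)=\bigwedge_{i=1}^n x_i$, input $x$ uniform on $\{0,1\}^n$, costs $(c_1,\dots,c_n)$ a uniformly random permutation of $\{1,\dots,n\}$. Online priced query model: the algorithm (possibly randomized) knows $f$ but not $x$ or $c$; it maintains investments $\theta$ (initially $0$), increasing one coordinate by a positive amount per step; $x_i$ is revealed once $\theta_i\ge c_i$; cost is $\|\theta\|_1$ at halting. Probabilities and expectations are over input, costs, and the algorithm's randomness. *)

(* Defs.v *)
From HB Require Import structures.
From mathcomp Require Import all_boot all_order all_algebra all_fingroup.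
From mathcomp Require Import all_classical all_reals all_analysis measurable_realfun.
Set Implicit Arguments. Unset Strict Implicit. Unset Printing Implicit Defensive.
Import Order.TTheory GRing.Theory Num.Theory.
Local Open Scope classical_set_scope.
Local Open Scope ring_scope.

(* Input x : {ffun 'I_n -> bool};  costs: a permutation c of 'I_n, the
   cost of variable i being (c i).+1  (so the costs form a permutation of
   {1,...,n}).

   A deterministic online algorithm sees, after each step, an observation
   [option bool]: [Some b] iff the coordinate just invested in is revealed
   (theta_i >= c_i), with value b = x_i; [None] otherwise.  Based on the
   history of observations it either halts ([None]) or invests a positive
   amount d in coordinate i ([Some (i, d)]). *)
Definition alg (R : realType) (n : nat) := seq (option bool) -> option ('I_n * R).

Definition valid_alg (R : realType) (n : nat) (A : alg R n) : Prop :=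
  forall h i d, A h = Some (i, d) -> 0 < d.

Definition costval {R : realType} {n : nat} (c : {perm 'I_n}) (i : 'I_n) : R :=
  (c i).+1%:R.

(* state after k steps: (history, investments theta, halted flag) *)
Fixpoint run (R : realType) (n : nat) (A : alg R n) (x : {ffun 'I_n -> bool})
  (c : {perm 'I_n}) (k : nat) : seq (option bool) * ('I_n -> R) * bool :=
  match k with
  | 0 => ([::], (fun _ => 0), false)
  | k'.+1 =>
    let '(h, th, hl) := run A x c k' in
    if hl then (h, th, hl) else
    match A h with
    | None => (h, th, true)
    | Some (i, d) =>
      let th' := fun j => if j == i then th j + d else th j in
      (rcons h (if costval c i <= th' i then Some (x i) else None), th', false)
    end
  end.

Definition theta (R : realType) (n : nat) (A : alg R n) x c k : 'I_n -> R :=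
  (run A x c k).1.2.

Definition reveals (R : realType) (n : nat) (A : alg R n) x c : Prop :=
  exists k i, costval c i <= theta A x c k i.

(* cost = ||theta||_1 at halting; written as the supremum over time of
   ||theta_k||_1 (theta is nondecreasing and frozen after halting, so this is
   exactly the cost at halting; for a non-halting run it is the limit). *)
Definition run_cost (R : realType) (n : nat) (A : alg R n) x c : \bar R :=
  ereal_sup (range (fun k => (\sum_i theta A x c k i)%:E)).

Local Open Scope ereal_scope.

(* randomized algorithm: A : Omega -> alg R n, with random seed w ~ P,
   independent of the uniform input x and uniform cost permutation c. *)
Definition prob_reveal (R : realType) (n : nat) (d : measure_display)
  (Omega : measurableType d) (P : probability Omega R) (A : Omega -> alg R n)
  : \bar R :=
  (\sum_(x : {ffun 'I_n -> bool}) \sum_(c : {perm 'I_n})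
     P [set w | reveals (A w) x c])
  * ((#|{ffun 'I_n -> bool}| * #|{perm 'I_n}|)%:R^-1)%:E.

Definition exp_cost (R : realType) (n : nat) (d : measure_display)
  (Omega : measurableType d) (P : probability Omega R) (A : Omega -> alg R n)
  : \bar R :=
  (\sum_(x : {ffun 'I_n -> bool}) \sum_(c : {perm 'I_n})
     \int[P]_w run_cost (A w) x c)
  * ((#|{ffun 'I_n -> bool}| * #|{perm 'I_n}|)%:R^-1)%:E.

(* Main.v *)
Require Import Defs.
From HB Require Import structures.
From mathcomp Require Import all_boot all_order all_algebra all_fingroup.
From mathcomp Require Import all_classical all_reals all_analysis measurable_realfun.
From mathcomp Require Import ring lra.
Import Order.TTheory GRing.Theory Num.Theory.
Local Open Scope classical_set_scope.
Local Open Scope ring_scope.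

Section Count.
Context {R : realType} {n : nat}.

Lemma sum_ind_le (t : R) : 0 <= t ->
  \sum_(j < n) (if (j.+1%:R <= t) then 1 else 0 : R) <= t.
Proof.
move=> t0; rewrite -(big_mkord xpredT (fun j => (if (j.+1%:R <= t) then 1 else 0 : R))).
elim: n => [|m IH]; first by rewrite big_geq.
rewrite big_nat_recr //=.
case: ifP => H; last by rewrite addr0.
apply: le_trans H; rewrite -natr1 lerD2r.
have -> : m%:R = \sum_(0 <= j < m) (1:R) by rewrite sumr_const_nat subn0.
by apply: ler_sum => j _; case: ifP.
Qed.

Lemma sum_perm_const (g : 'I_n -> R) (i i' : 'I_n) :
  \sum_(c : {perm 'I_n}) g (c i) = \sum_(c : {perm 'I_n}) g (c i').
Proof.
rewrite (reindex_inj (mulgI (tperm i i'))) /=.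
by apply: eq_bigr => c _; rewrite permM tpermL.
Qed.

Lemma count_core (t : 'I_n -> R) : (forall i, 0 <= t i) ->
  n%:R * \sum_(c : {perm 'I_n}) (if [exists i, costval c i <= t i] then 1 else 0)
  <= n`!%:R * \sum_i t i.
Proof.
move=> t0.
have step1 : \sum_(c : {perm 'I_n}) (if [exists i, costval c i <= t i] then 1 else 0)
   <= \sum_i \sum_(c : {perm 'I_n}) (if costval c i <= t i then 1 else 0 : R).
  rewrite exchange_big /=; apply: ler_sum => c _.
  case: existsP => [[i Hi]|_]; last by apply: sumr_ge0 => i _; case: ifP.
  rewrite (bigD1 i) //= Hi lerDl; apply: sumr_ge0 => j _; by case: ifP.
apply: le_trans (ler_wpM2l (ler0n _ _) step1) _.
rewrite mulr_sumr mulr_sumr; apply: ler_sum => i _.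
pose g := fun j : 'I_n => (if (j.+1%:R <= t i) then 1 else 0 : R).
have -> : \sum_(c : {perm 'I_n}) (if costval c i <= t i then 1 else 0 : R)
        = \sum_(c : {perm 'I_n}) g (c i) by [].
have -> : n%:R * \sum_(c : {perm 'I_n}) g (c i) = n`!%:R * \sum_j g j.
  transitivity (\sum_(i' : 'I_n) \sum_(c : {perm 'I_n}) g (c i')).
    symmetry; rewrite (eq_bigr (fun _ => \sum_(c : {perm 'I_n}) g (c i))); last first.
      by move=> i' _; rewrite (sum_perm_const g i' i).
    by rewrite sumr_const card_ord mulr_natl.
  rewrite exchange_big /=.
  transitivity (\sum_(c : {perm 'I_n}) \sum_j g j).
    by apply: eq_bigr => c _; rewrite [RHS](reindex_inj (@perm_inj _ c)).
  by rewrite sumr_const card_Sn mulr_natl.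
by apply: ler_wpM2l; [exact: ler0n | exact: sum_ind_le].
Qed.

End Count.
Section Det.
Variables (R : realType) (n : nat) (A : alg R n).

Fixpoint run0 (k : nat) : seq (option bool) * ('I_n -> R) * bool :=
  match k with
  | 0 => ([::], (fun _ => 0), false)
  | k'.+1 =>
    let '(h, th, hl) := run0 k' in
    if hl then (h, th, hl) else
    match A h with
    | None => (h, th, true)
    | Some (i, d) =>
      let th' := fun j => if j == i then th j + d else th j in
      (rcons h None, th', false)
    end
  end.

Definition theta0 k := (run0 k).1.2.

Lemma run_run0 x c k :
  (forall j, (j <= k)%N -> forall i, theta A x c j i < costval c i) ->
  run A x c k = run0 k.
Proof.
elim: k => [//|k IH] H.
have E : run A x c k = run0 k by apply: IH => j jk; apply: H; exact: leqW.
have H1 := H k.+1 (leqnn _).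
move: H1; rewrite /theta /= E.
case: (run0 k) => [[h th] [|]] //=.
case: (A h) => [[i d]|] //= H1.
by rewrite leNgt H1.
Qed.

Lemma theta_succ x c k : run A x c k = run0 k -> theta A x c k.+1 = theta0 k.+1.
Proof.
rewrite /theta /theta0 /= => ->.
case: (run0 k) => [[h th] [|]] //=.
by case: (A h) => [[i d]|].
Qed.

Hypothesis vA : valid_alg A.

Lemma theta0_step k i : 0 <= theta0 k i /\ theta0 k i <= theta0 k.+1 i.
Proof.
elim: k => [|k [IH1 _]]; rewrite /theta0 /=.
  split => //; case E: (A [::]) => [[j d]|] //=.
  by have := vA _ _ _ E; case: (i == j) => // /ltW; rewrite add0r.
move: IH1; rewrite /theta0 /=.
case: (run0 k) => [[h th] [|]] //= H0.
case E: (A h) => [[j d]|] //=.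
have d0 := vA _ _ _ E.
split; first by case: eqP => //; rewrite addr_ge0 // ltW.
case E2: (A (rcons h None)) => [[j' d']|] //=.
have d0' := vA _ _ _ E2.
by case: (i == j') => //; rewrite lerDl ltW.
Qed.

Lemma theta0_ge0 k i : 0 <= theta0 k i.
Proof. by case: (theta0_step k i). Qed.

Lemma theta0_mono k k' i : (k <= k')%N -> theta0 k i <= theta0 k' i.
Proof.
move/subnK <-; elim: (k' - k)%N => [|m IH]; first by rewrite add0n.
by apply: le_trans IH _; rewrite addSn; case: (theta0_step (m + k) i).
Qed.

Lemma sum_le_cost x c k : ((\sum_i theta A x c k i)%:E <= run_cost A x c)%E.
Proof. by apply: ereal_sup_ubound; exists k. Qed.

Lemma reveal_small x c : reveals A x c ->
  exists k i, costval c i <= theta0 k i /\ ((\sum_i theta0 k i)%:E <= run_cost A x c)%E.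
Proof.
case=> k0 [i0 Hi0].
have exP : exists k, [exists i, costval c i <= theta A x c k i].
  by exists k0; apply/existsP; exists i0.
case: (ex_minnP exP) => k /existsP [i Hi] Hmin.
case: k Hi Hmin => [|m] Hi Hmin.
  by move: Hi; rewrite /theta /= /costval lern0.
have E : run A x c m = run0 m.
  apply: run_run0 => j jm i'; rewrite ltNge; apply/negP => Hj.
  have := Hmin j (introT existsP (ex_intro _ i' Hj)).
  by rewrite ltnNge jm.
have T := theta_succ _ _ _ E.
exists m.+1, i; split; first by rewrite -T.
by rewrite -T; apply: sum_le_cost.
Qed.

Lemma cover (s : R) x (cs : seq {perm 'I_n}) : 0 <= s ->
  (forall c, c \in cs -> reveals A x c /\ (run_cost A x c <= s%:E)%E) ->
  exists K, \sum_i theta0 K i <= s /\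
    forall c, c \in cs -> exists i, costval c i <= theta0 K i.
Proof.
move=> s0; elim: cs => [|c cs IH] H.
  exists 0%N; split => //; rewrite /theta0 /= big1 //.
have [K [HK1 HK2]] : exists K, \sum_i theta0 K i <= s /\
    forall c, c \in cs -> exists i, costval c i <= theta0 K i.
  by apply: IH => c' Hc'; apply: H; rewrite inE Hc' orbT.
have [Hr Hc] := H c (mem_head _ _).
have [k [i [Hi Hk]]] := reveal_small _ _ Hr.
have Hks : \sum_i theta0 k i <= s by rewrite -lee_fin (le_trans Hk Hc).
exists (maxn k K); split.
  case: (leqP k K) => kK.
    by [].
  by [].
move=> c'; rewrite inE => /orP [/eqP -> | Hc'].
  by exists i; apply: le_trans Hi (theta0_mono _ _ _ (leq_maxl _ _)).
have [i' Hi'] := HK2 c' Hc'.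
by exists i'; apply: le_trans Hi' (theta0_mono _ _ _ (leq_maxr _ _)).
Qed.

End Det.
Arguments run0 {R n} A k.
Arguments theta0 {R n} A k.
Arguments run_run0 {R n} A x c k.
Arguments theta_succ {R n} A x c k.
Arguments theta0_step {R n} A vA k i.
Arguments theta0_ge0 {R n} A vA k i.
Arguments theta0_mono {R n} A vA k k' i.
Arguments sum_le_cost {R n} A x c k.
Arguments reveal_small {R n} A x c.
Arguments cover {R n} A vA s x cs.

Section Key.
Variables (R : realType) (n : nat) (A : alg R n).
Hypothesis vA : valid_alg A.

Lemma cost_ge0 x c : (0 <= run_cost A x c)%E.
Proof.
apply: le_trans (sum_le_cost A x c 0).
by rewrite /theta /= big1.
Qed.

Lemma key_det (s : R) x : 0 <= s ->
  n%:R * \sum_(c : {perm 'I_n})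
     (if `[< reveals A x c /\ (run_cost A x c <= s%:E)%E >] then 1 else 0)
  <= n`!%:R * s.
Proof.
move=> s0.
pose cs := [seq c <- enum {perm 'I_n} | `[< reveals A x c /\ (run_cost A x c <= s%:E)%E >]].
have [K [HK1 HK2]] : exists K, \sum_i theta0 A K i <= s /\
    forall c, c \in cs -> exists i, costval c i <= theta0 A K i.
  apply: cover => // c; rewrite mem_filter => /andP [/asboolP H _]; exact: H.
have H1 : \sum_(c : {perm 'I_n})
     (if `[< reveals A x c /\ (run_cost A x c <= s%:E)%E >] then 1 else 0) <=
   \sum_(c : {perm 'I_n}) (if [exists i, costval c i <= theta0 A K i] then 1 else 0 : R).
  apply: ler_sum => c _.
  case: ifP => Hb; last by case: ifP.
  have [i Hi] : exists i, costval c i <= theta0 A K i.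
    by apply: HK2; rewrite mem_filter Hb mem_enum.
  by have -> : [exists i, costval c i <= theta0 A K i] by apply/existsP; exists i.
apply: le_trans (ler_wpM2l (ler0n _ n) H1) _.
apply: le_trans (count_core (theta0 A K) (theta0_ge0 A vA K)) _.
by apply: ler_wpM2l; [exact: ler0n | exact: HK1].
Qed.

End Key.

Section PW.
Variables (R : realType) (n : nat) (A : alg R n).
Hypothesis vA : valid_alg A.

Lemma pointwise (s : R) x : 0 <= s -> (0 < n)%N ->
  (\sum_(c : {perm 'I_n}) (s * (if `[< reveals A x c >] then 1 else 0))%:E
   <= \sum_(c : {perm 'I_n}) run_cost A x c + (s * (n`!%:R / n%:R * s))%:E)%E.
Proof.
move=> s0 n0.
pose B c := `[< reveals A x c /\ (run_cost A x c <= s%:E)%E >].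
apply: (@le_trans _ _ (\sum_(c : {perm 'I_n}) (run_cost A x c + (s * (if B c then 1 else 0))%:E))%E).
  apply: lee_sum => c _.
  case: (pselect (reveals A x c)) => Hr; last first.
    rewrite asboolF // mulr0; apply: adde_ge0; first exact: cost_ge0.
    by rewrite lee_fin; case: ifP; rewrite ?mulr0 ?mulr1.
  rewrite asboolT // mulr1.
  case: (pselect (run_cost A x c <= s%:E)%E) => Hc.
    rewrite /B asboolT // mulr1 leeDr //; exact: cost_ge0.
  rewrite /B asboolF; last by case.
  by rewrite mulr0 adde0; apply/ltW; rewrite ltNge; apply/negP.
rewrite big_split /= sumEFin leeD2l // lee_fin -mulr_sumr.
apply: ler_wpM2l => //.
have K := key_det _ _ A vA s x s0.
have nR : (0 < n%:R :> R) by rewrite ltr0n.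
rewrite mulrAC ler_pdivlMr // mulrC; exact: K.
Qed.
End PW.

Section PX.
Local Open Scope ereal_scope.
Variables (R : realType) (n : nat) (d : measure_display) (Omega : measurableType d)
  (P : probability Omega R) (A : Omega -> alg R n).
Hypothesis vA : forall w, valid_alg (A w).
Hypothesis mrev : forall x c, measurable [set w | reveals (A w) x c].
Hypothesis mcost : forall x c, measurable_fun [set: Omega] (fun w => run_cost (A w) x c : \bar R).

Lemma per_x x (s : R) : (0 <= s)%R -> (0 < n)%N ->
  s%:E * (\sum_(c : {perm 'I_n}) P [set w | reveals (A w) x c])
  <= \sum_(c : {perm 'I_n}) \int[P]_w run_cost (A w) x c
     + (s * (n`!%:R / n%:R * s))%:E.
Proof.
move=> s0 n0.
have mind : forall c, measurable_fun [set: Omega]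
    (fun w => (s * \1_[set w | reveals (A w) x c] w)%:E).
  move=> c; apply/measurable_EFinP; apply: measurable_funM => //.
have ind0 : forall c w, 0 <= (s * \1_[set w | reveals (A w) x c] w)%:E.
  by move=> c w; rewrite lee_fin mulr_ge0 // indicE.
rewrite ge0_sume_distrr; last by move=> c _; exact: measure_ge0.
have E1 : forall c, s%:E * P [set w | reveals (A w) x c]
    = \int[P]_w (s * \1_[set w | reveals (A w) x c] w)%:E.
  move=> c; rewrite (_ : (fun w => (s * \1_[set w | reveals (A w) x c] w)%:E)
     = (fun w => s%:E * (\1_[set w | reveals (A w) x c] w)%:E)); last first.
    by apply/funext => w; rewrite EFinM.
  rewrite ge0_integralZl //; first by rewrite integral_indic // setIT.
  by apply/measurable_EFinP; exact: measurable_indic.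
rewrite (eq_bigr _ (fun c _ => E1 c)) -ge0_integral_sum //.
rewrite -ge0_integral_sum //; last by move=> c w _; exact: cost_ge0.
have E2 : (s * (n`!%:R / n%:R * s))%:E
    = \int[P]_w cst (s * (n`!%:R / n%:R * s))%:E w.
  rewrite integral_cst // -{1}(mule1 (s * (n`!%:R / n%:R * s))%:E); congr (_ * _); symmetry; exact: probability_setT.
rewrite E2 -ge0_integralD //; last first.
  - by move=> w _; rewrite /= lee_fin mulr_ge0 // mulr_ge0 // divr_ge0.
  - exact: emeasurable_sum.
  - by move=> w _; apply: sume_ge0 => c _; exact: cost_ge0.
apply: ge0_le_integral => //.
- by move=> w _; apply: sume_ge0 => c _; exact: ind0.
- exact: emeasurable_sum.
- by apply: emeasurable_funD => //; exact: emeasurable_sum.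
move=> w _.
rewrite (eq_bigr (fun c => (s * (if `[< reveals (A w) x c >] then 1 else 0))%:E)).
  exact: (pointwise _ _ (A w) (vA w) s x s0 n0).
move=> c _; rewrite indicE.
case: (pselect (reveals (A w) x c)) => H.
  by rewrite mem_set // asboolT.
by rewrite memNset // asboolF.
Qed.
End PX.

Theorem mainTheorem15 (R : realType) (p : R) :
  0 < p <= 1 ->
  exists alpha : R, 0 < alpha /\
    forall n : nat, (1 <= n)%N ->
    forall (d : measure_display) (Omega : measurableType d)
           (P : probability Omega R) (A : Omega -> alg R n),
      (forall w, valid_alg (A w)) ->
      (forall x c, measurable [set w | reveals (A w) x c]) ->
      (forall x c, measurable_fun [set: Omega] (fun w => run_cost (A w) x c : \bar R)) ->
      (p%:E <= prob_reveal P A)%E ->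
      ((alpha * n%:R)%:E <= exp_cost P A)%E.
Proof.
move=> /andP [p0 p1].
exists (p ^+ 2 / 4); split; first by rewrite divr_gt0 // exprn_gt0.
move=> n n1 d Omega P A vA mrev mcost Hp.
pose s := p * n%:R / 2.
have s0 : 0 <= s by rewrite divr_ge0 // mulr_ge0 // ltW.
pose c0 := s * (n`!%:R / n%:R * s).
pose X := #|{ffun 'I_n -> bool}|.
pose k := ((X * #|{perm 'I_n}|)%:R^-1 : R).
have k0 : 0 <= k by rewrite invr_ge0.
have H1 : (s%:E * (\sum_(x : {ffun 'I_n -> bool}) \sum_(c : {perm 'I_n})
      P [set w | reveals (A w) x c])
   <= (\sum_(x : {ffun 'I_n -> bool}) \sum_(c : {perm 'I_n}) \int[P]_w run_cost (A w) x c)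
      + (X%:R * c0)%:E)%E.
  rewrite ge0_sume_distrr; last by move=> x _; apply: sume_ge0 => c _; exact: measure_ge0.
  apply: le_trans (_ : (\sum_(x : {ffun 'I_n -> bool})
     ((\sum_(c : {perm 'I_n}) \int[P]_w run_cost (A w) x c) + c0%:E)) <= _)%E.
    by apply: lee_sum => x _; exact: per_x.
  by rewrite big_split /= sumEFin sumr_const mulr_natl.
have k0E : (0 <= k%:E)%E by rewrite lee_fin.
have H2 := lee_wpmul2r k0E H1.
rewrite muleDl ?fin_num_adde_defl // -EFinM -muleA in H2.
have Ep : prob_reveal P A = ((\sum_(x : {ffun 'I_n -> bool}) \sum_(c : {perm 'I_n})
      P [set w | reveals (A w) x c]) * k%:E)%E by [].
have Ec : exp_cost P A = ((\sum_(x : {ffun 'I_n -> bool}) \sum_(c : {perm 'I_n})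
      \int[P]_w run_cost (A w) x c) * k%:E)%E by [].
rewrite -Ep -Ec in H2.
have s0E : (0 <= s%:E)%E by rewrite lee_fin.
have H3 := lee_wpmul2l s0E Hp.
have H4 := le_trans H3 H2.
have n0 : (0 < n%:R :> R) by rewrite ltr0n.
have X0 : (0 < X%:R :> R).
  by rewrite /X card_ffun ltr0n card_bool expn_gt0.
have Eq : X%:R * c0 * k = s ^+ 2 / n%:R.
  rewrite /k /c0 card_Sn natrM.
  have f0 : (n`!%:R : R) != 0 by rewrite pnatr_eq0 -lt0n fact_gt0.
  field; apply/and3P; split => //; [exact: lt0r_neq0 | exact: lt0r_neq0].
rewrite Eq in H4.
move: H4; case: (exp_cost P A) => [r| |] H4 //; last by rewrite leey.
rewrite -EFinM -EFinD lee_fin in H4.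
rewrite lee_fin.
have -> : p ^+ 2 / 4 * n%:R = s * p - s ^+ 2 / n%:R.
  rewrite /s; field; exact: lt0r_neq0.
by rewrite lerBlDr.
Qed.
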